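(* Let $G_1,G_2,H_1,H_2\in SL^+_{sym}(2)$, let $g_i,h_i$ be the largest eigenvalues of $G_i,H_i$, and assume $K^{min}=\sqrt{g_1h_1g_2h_2}$. Then there exist $A,B\in O(2)$ such that $$A^TG_1A=\begin{pmatrix}g_1&0\\0&\frac1{g_1}\end{pmatrix},\quad A^TG_2A=\begin{pmatrix}\frac1{g_2}&0\\0&g_2\end{pmatrix},\quad B^TH_1B=\begin{pmatrix}h_1&0\\0&\frac1{h_1}\end{pmatrix},\quad B^TH_2B=\begin{pmatrix}\frac1{h_2}&0\\0&h_2\end{pmatrix}.$$
   Context: $SL^+_{sym}(2)$: real symmetric positive definite $2\times2$ matrices with determinant $1$; $SL(2)$: real $2\times2$ matrices of determinant $1$; $O(2)$: orthogonal $2\times 2$ matrices; $\lambda_{\max}$: largest eigenvalue. $K^{min}:=\min_{A,B\in SL(2)}\max_{i=1,2}\lambda_{\max}(B^TG_iB)\,\lambda_{\max}(A^TH_iA)$. *)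

(* Defs.v *)
From HB Require Import structures.
From mathcomp Require Import all_boot all_order all_algebra.
Set Implicit Arguments. Unset Strict Implicit. Unset Printing Implicit Defensive.
Import Order.TTheory GRing.Theory Num.Theory.
Local Open Scope ring_scope.

Definition SL2 (R : rcfType) (A : 'M[R]_2) : Prop := \det A = 1.

Definition O2 (R : rcfType) (A : 'M[R]_2) : Prop := A^T *m A = 1%:M.

Definition sym_posdef (R : rcfType) (G : 'M[R]_2) : Prop :=
  G^T = G /\ forall v : 'cV[R]_2, v != 0 -> 0 < (v^T *m G *m v) 0 0.

Definition SLsym2 (R : rcfType) (G : 'M[R]_2) : Prop :=
  sym_posdef G /\ \det G = 1.

(* Largest eigenvalue of a 2x2 real matrix with real spectrum (e.g. symmetric):
   the larger root of its characteristic polynomial X^2 - tr M X + det M. *)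
Definition lmax (R : rcfType) (M : 'M[R]_2) : R :=
  (\tr M + Num.sqrt (\tr M ^+ 2 - 4 * \det M)) / 2.

Definition Kobj (R : rcfType) (G1 G2 H1 H2 A B : 'M[R]_2) : R :=
  Num.max (lmax (B^T *m G1 *m B) * lmax (A^T *m H1 *m A))
          (lmax (B^T *m G2 *m B) * lmax (A^T *m H2 *m A)).

Definition Kmin_is (R : rcfType) (G1 G2 H1 H2 : 'M[R]_2) (c : R) : Prop :=
  (exists A B, SL2 A /\ SL2 B /\ Kobj G1 G2 H1 H2 A B = c) /\
  (forall A B, SL2 A -> SL2 B -> c <= Kobj G1 G2 H1 H2 A B).

Definition diag2 (R : rcfType) (a b : R) : 'M[R]_2 :=
  \matrix_(i < 2, j < 2) if i == j then (if (i : nat) == 0%N then a else b) else 0.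

(* Main.v *)
Require Import Defs.
From HB Require Import structures.
From mathcomp Require Import all_boot all_order all_algebra.
From mathcomp Require Import ring lra.
Import Order.TTheory GRing.Theory Num.Theory.
Set Implicit Arguments. Unset Strict Implicit. Unset Printing Implicit Defensive.
Local Open Scope ring_scope.
Section S.
Variable R : rcfType.
Definition mk2 (a b c d : R) : 'M[R]_2 :=
  \matrix_(i < 2, j < 2) if i == 0 then (if j == 0 then a else b)
                         else (if j == 0 then c else d).
Lemma ord2P (i : 'I_2) : i = 0 \/ i = 1.
Proof. by case: i => [[|[|//]] ?]; [left|right]; apply/val_inj. Qed.
Lemma mk2E (M : 'M[R]_2) : M = mk2 (M 0 0) (M 0 1) (M 1 0) (M 1 1).
Proof. by apply/matrixP => i j; rewrite mxE; case: (ord2P i) => ->; case: (ord2P j) => ->. Qed.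
Lemma mk2_ex (M : 'M[R]_2) : exists a b c d : R, M = mk2 a b c d.
Proof. by exists (M 0 0), (M 0 1), (M 1 0), (M 1 1); apply: mk2E. Qed.
Lemma mk2_inj a b c d a' b' c' d' :
  a = a' -> b = b' -> c = c' -> d = d' -> mk2 a b c d = mk2 a' b' c' d'.
Proof. by move=> -> -> -> ->. Qed.
Lemma mk2_mul a b c d a' b' c' d' :
  mk2 a b c d *m mk2 a' b' c' d' =
  mk2 (a * a' + b * c') (a * b' + b * d') (c * a' + d * c') (c * b' + d * d').
Proof.
apply/matrixP => i j; rewrite mxE big_ord_recl big_ord1 !mxE /=.
by case: (ord2P i) => ->; case: (ord2P j) => ->.
Qed.
Lemma mk2_tr a b c d : (mk2 a b c d)^T = mk2 a c b d.
Proof. by apply/matrixP => i j; rewrite !mxE; case: (ord2P i) => ->; case: (ord2P j) => ->. Qed.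
Lemma det2 (M : 'M[R]_2) : \det M = M 0 0 * M 1 1 - M 0 1 * M 1 0.
Proof.
rewrite (expand_det_row _ 0) !big_ord_recl big_ord0 /cofactor !det_mx11 !mxE /=.
have -> : (lift 0 0 : 'I_2) = 1 by apply/val_inj.
have -> : (lift (1 : 'I_2) 0 : 'I_2) = 0 by apply/val_inj.
have -> : (ord0 : 'I_2) = 0 by apply/val_inj.
by rewrite /bump /= expr0 expr1 mul1r mulN1r addr0 mulrN.
Qed.
Lemma mk2_det a b c d : \det (mk2 a b c d) = a * d - b * c.
Proof. by rewrite det2 !mxE. Qed.
Lemma mk2_trace a b c d : \tr (mk2 a b c d) = a + d.
Proof. by rewrite /mxtrace big_ord_recl big_ord1 !mxE. Qed.
Lemma mk2_1 : (1%:M : 'M[R]_2) = mk2 1 0 0 1.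
Proof. by apply/matrixP => i j; rewrite !mxE; case: (ord2P i) => ->; case: (ord2P j) => ->. Qed.
Lemma diag2E (x y : R) : diag2 x y = mk2 x 0 0 y.
Proof. by apply/matrixP => i j; rewrite !mxE; case: (ord2P i) => ->; case: (ord2P j) => ->. Qed.

Lemma SLsym2_facts a b c d : SLsym2 (mk2 a b c d) -> c = b /\ 0 < a /\ a * d - b ^+ 2 = 1.
Proof.
move=> [[hs hp] hd].
have cb : c = b by move/matrixP: hs => /(_ 0 1); rewrite !mxE.
split => //; split; last by rewrite mk2_det cb in hd; rewrite -hd expr2.
pose v : 'cV[R]_2 := \matrix_(i < 2, j < 1) (if i == 0 then 1 else 0).
have nz : v != 0.
  by apply/eqP => /matrixP /(_ 0 0); rewrite !mxE /= => /eqP; rewrite oner_eq0.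
move: (hp v nz); rewrite !mxE big_ord_recl big_ord1 !mxE !big_ord_recl !big_ord0 !mxE /=.
by rewrite !mulr1 !mulr0 !mul0r !addr0 mul1r.
Qed.

Lemma sqrt4 (X : R) : Num.sqrt (4 * X) = 2 * Num.sqrt X.
Proof.
rewrite sqrtrM; last by lra.
rewrite (_ : 4 = 2 ^+ 2 :> R); last by ring.
by rewrite sqrtr_sqr ger0_norm.
Qed.

Lemma lmax_mk2 a b d : a * d - b ^+ 2 = 1 ->
  lmax (mk2 a b b d) = (a + d) / 2 + Num.sqrt (((a - d) / 2) ^+ 2 + b ^+ 2).
Proof.
move=> h; rewrite /lmax mk2_trace mk2_det.
rewrite (_ : (a + d) ^+ 2 - 4 * (a * d - b * b) = 4 * (((a - d) / 2) ^+ 2 + b ^+ 2)); last by field.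
by rewrite sqrt4; field.
Qed.

Lemma trBGB a b d e f h :
  lmax ((mk2 e 0 f h)^T *m mk2 a b b d *m mk2 e 0 f h) =
  let T := a * e ^+ 2 + 2 * b * e * f + d * (f ^+ 2 + h ^+ 2) in
  (T + Num.sqrt (T ^+ 2 - 4 * ((e * h) ^+ 2 * (a * d - b ^+ 2)))) / 2.
Proof.
rewrite /lmax mk2_tr !mk2_mul mk2_trace mk2_det /=.
congr ((_ + Num.sqrt (_ - 4 * _)) / 2); try ring.

Qed.

Lemma sqrt_sq (z : R) : 0 <= z -> Num.sqrt z ^+ 2 = z.
Proof. by move=> hz; rewrite sqr_sqrtr. Qed.

Lemma chol a1 b1 d1 a2 b2 d2 : 0 < a1 -> a1 * d1 - b1 ^+ 2 = 1 ->
  0 < a2 -> a2 * d2 - b2 ^+ 2 = 1 ->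
  let m := Num.sqrt (2 + 2 * ((a1 + d1) / 2 * ((a2 + d2) / 2) -
             ((a1 - d1) / 2 * ((a2 - d2) / 2) + b1 * b2))) in
  exists B, SL2 B /\
    lmax (B^T *m mk2 a1 b1 b1 d1 *m B) = (m + Num.sqrt (m ^+ 2 - 4)) / 2 /\
    lmax (B^T *m mk2 a2 b2 b2 d2 *m B) = (m + Num.sqrt (m ^+ 2 - 4)) / 2.
Proof.
move=> ha1 hd1 ha2 hd2 m.
set Sa := a1 + a2; set Sb := b1 + b2; set Sd := d1 + d2.
have eK : 2 + 2 * ((a1 + d1) / 2 * ((a2 + d2) / 2) -
             ((a1 - d1) / 2 * ((a2 - d2) / 2) + b1 * b2)) = Sa * Sd - Sb ^+ 2.
  have -> : Sa * Sd - Sb ^+ 2 = (a1 * d1 - b1 ^+ 2) + (a2 * d2 - b2 ^+ 2)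
             + (a1 * d2 + a2 * d1 - 2 * b1 * b2) by rewrite /Sa /Sb /Sd; ring.
  by rewrite hd1 hd2; field; rewrite ?mnz ?enz ?Sdnz.
have hK : 0 < a1 * d2 + a2 * d1 - 2 * b1 * b2.
  have e : a1 * a2 * (a1 * d2 + a2 * d1 - 2 * b1 * b2) =
           a1 ^+ 2 * (a2 * d2 - b2 ^+ 2) + a2 ^+ 2 * (a1 * d1 - b1 ^+ 2) + (a1 * b2 - a2 * b1) ^+ 2.
    by ring.
  rewrite hd1 hd2 in e.
  have h12 : 0 < a1 * a2 by apply: mulr_gt0.
  have : 0 < a1 * a2 * (a1 * d2 + a2 * d1 - 2 * b1 * b2).
    rewrite e; have s0 := sqr_ge0 (a1 * b2 - a2 * b1).
    have s1 : 0 < a1 ^+ 2 by rewrite exprn_gt0.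
    have s2 : 0 < a2 ^+ 2 by rewrite exprn_gt0.
    lra.
  by rewrite pmulr_rgt0.
have hpos : 0 < Sa * Sd - Sb ^+ 2.
  have -> : Sa * Sd - Sb ^+ 2 = (a1 * d1 - b1 ^+ 2) + (a2 * d2 - b2 ^+ 2)
             + (a1 * d2 + a2 * d1 - 2 * b1 * b2) by rewrite /Sa /Sb /Sd; ring.
  rewrite hd1 hd2; lra.
have hm2 : m ^+ 2 = Sa * Sd - Sb ^+ 2 by rewrite /m eK sqrt_sq //; lra.
have hm : 0 < m by rewrite /m eK sqrtr_gt0.
have hdd1 : 0 < d1 by nra.
have hdd2 : 0 < d2 by nra.
have hSd : 0 < Sd by rewrite /Sd; lra.
set e : R := Num.sqrt (Sd / m).
have he : 0 < e by rewrite /e sqrtr_gt0 divr_gt0.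
have he2 : e ^+ 2 = Sd / m by rewrite /e sqrt_sq // ltW // divr_gt0.
set f : R := - Sb / m / e; set h : R := 1 / e.
have mnz : m != 0 by rewrite gt_eqF.
have enz : e != 0 by rewrite gt_eqF.
have Sdnz : Sd != 0 by rewrite gt_eqF.
have eh : e * h = 1 by rewrite /h; field; rewrite ?mnz ?enz ?Sdnz.
have ef : e * f = - Sb / m.
  by rewrite /f; field; rewrite ?mnz ?enz ?Sdnz.
have fh : f ^+ 2 + h ^+ 2 = Sa / m.
  rewrite (_ : f ^+ 2 + h ^+ 2 = (Sb ^+ 2 / m ^+ 2 + 1) / e ^+ 2); last by rewrite /f /h; field; rewrite ?mnz ?enz ?Sdnz.
  rewrite he2 (_ : (Sb ^+ 2 / m ^+ 2 + 1) / (Sd / m) = (Sb ^+ 2 + m ^+ 2) / (m * Sd)); last by field; rewrite ?mnz ?enz ?Sdnz.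
  rewrite hm2 (_ : Sb ^+ 2 + (Sa * Sd - Sb ^+ 2) = Sa * Sd); last by ring.
  by field; rewrite ?mnz ?enz ?Sdnz.
have T (a b d : R) : a * d - b ^+ 2 = 1 ->
    a * e ^+ 2 + 2 * b * e * f + d * (f ^+ 2 + h ^+ 2) = (a * Sd - 2 * b * Sb + d * Sa) / m.
  by move=> _; rewrite -mulrA ef fh he2; field; rewrite ?mnz ?enz ?Sdnz.
exists (mk2 e 0 f h); split; first by rewrite /SL2 mk2_det mul0r subr0.
rewrite !trBGB /= !T // eh hd1 hd2 expr1n !mulr1.
have n1 : a1 * Sd - 2 * b1 * Sb + d1 * Sa = m ^+ 2.
  have -> : a1 * Sd - 2 * b1 * Sb + d1 * Sa = 2 * (a1 * d1 - b1 ^+ 2) + (a1 * d2 + a2 * d1 - 2 * b1 * b2)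
    by rewrite /Sa /Sb /Sd; ring.
  rewrite hm2 (_ : Sa * Sd - Sb ^+ 2 = (a1 * d1 - b1 ^+ 2) + (a2 * d2 - b2 ^+ 2)
             + (a1 * d2 + a2 * d1 - 2 * b1 * b2)); last by rewrite /Sa /Sb /Sd; ring.
  rewrite hd1 hd2; ring.
have n2 : a2 * Sd - 2 * b2 * Sb + d2 * Sa = m ^+ 2.
  have -> : a2 * Sd - 2 * b2 * Sb + d2 * Sa = 2 * (a2 * d2 - b2 ^+ 2) + (a1 * d2 + a2 * d1 - 2 * b1 * b2)
    by rewrite /Sa /Sb /Sd; ring.
  rewrite hm2 (_ : Sa * Sd - Sb ^+ 2 = (a1 * d1 - b1 ^+ 2) + (a2 * d2 - b2 ^+ 2)
             + (a1 * d2 + a2 * d1 - 2 * b1 * b2)); last by rewrite /Sa /Sb /Sd; ring.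
  rewrite hd1 hd2; ring.
rewrite n1 n2 (_ : m ^+ 2 / m = m); last by field; rewrite ?mnz ?enz ?Sdnz.
by [].
Qed.
Lemma half_angle (C S : R) : C ^+ 2 + S ^+ 2 = 1 ->
  exists c s : R, c ^+ 2 + s ^+ 2 = 1 /\ c ^+ 2 - s ^+ 2 = C /\ 2 * c * s = S.
Proof.
move=> h.
have [hC|hC] := eqVneq C (-1).
  exists 0, 1; split; first by ring.
  have hS : S ^+ 2 = 0 by rewrite hC in h; lra.
  have /eqP -> : S == 0 by rewrite -sqrf_eq0 hS.
  by split; [rewrite hC; ring | ring].
have hC1 : 0 < 1 + C.
  have : -1 <= C by nra.
  rewrite le_eqVlt => /orP [/eqP e|]; first by rewrite e eqxx in hC.
  lra.
set n := Num.sqrt (2 + 2 * C).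
have hn : 0 < n by rewrite sqrtr_gt0; lra.
have hn2 : n ^+ 2 = 2 + 2 * C by rewrite sqrt_sq //; lra.
exists ((1 + C) / n), (S / n).
have nz : n != 0 by rewrite gt_eqF.
split; [|split].
- rewrite !expr_div_n hn2 (_ : S ^+ 2 = 1 - C ^+ 2); last by lra.
  field; lra.
- rewrite !expr_div_n hn2 (_ : S ^+ 2 = 1 - C ^+ 2); last by lra.
  field; lra.
- rewrite (_ : 2 * ((1 + C) / n) * (S / n) = 2 * (1 + C) * S / n ^+ 2); last by field.
  rewrite hn2; field; lra.
Qed.

Lemma sq0 (x : R) : x ^+ 2 = 0 -> x = 0.
Proof. by move=> h; apply/eqP; rewrite -sqrf_eq0 h. Qed.

Lemma rotCS (q1 r1 s1 q2 r2 s2 : R) :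
  0 <= s1 -> s1 ^+ 2 = q1 ^+ 2 + r1 ^+ 2 ->
  0 <= s2 -> s2 ^+ 2 = q2 ^+ 2 + r2 ^+ 2 ->
  q1 * q2 + r1 * r2 = - (s1 * s2) ->
  exists C S : R, C ^+ 2 + S ^+ 2 = 1 /\
    q1 * C + r1 * S = s1 /\ - q1 * S + r1 * C = 0 /\
    q2 * C + r2 * S = - s2 /\ - q2 * S + r2 * C = 0.
Proof.
move=> hs1 e1 hs2 e2 hc.
have lag : q1 * r2 - q2 * r1 = 0.
  apply: sq0.
  have -> : (q1 * r2 - q2 * r1) ^+ 2 = (s1 * s2) ^+ 2 - (q1 * q2 + r1 * r2) ^+ 2.
    rewrite exprMn e1 e2; ring.
  by rewrite hc; ring.
have [hD|hD] := eqVneq (s1 + s2) 0.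
  have z1 : s1 = 0 by lra.
  have z2 : s2 = 0 by lra.
  have q10 : q1 = 0 by apply: sq0; nra.
  have r10 : r1 = 0 by apply: sq0; nra.
  have q20 : q2 = 0 by apply: sq0; nra.
  have r20 : r2 = 0 by apply: sq0; nra.
  exists 1, 0; rewrite q10 r10 q20 r20 z1 z2; (repeat split); ring.
exists ((q1 - q2) / (s1 + s2)), ((r1 - r2) / (s1 + s2)).
split; [|split; [|split; [|split]]].
- rewrite !expr_div_n -mulrDl.
  rewrite (_ : (q1 - q2) ^+ 2 + (r1 - r2) ^+ 2 = (s1 + s2) ^+ 2); last first.
    rewrite (_ : (s1 + s2) ^+ 2 = s1 ^+ 2 + s2 ^+ 2 + 2 * (s1 * s2)); last by ring.
    rewrite e1 e2 (_ : s1 * s2 = - (q1 * q2 + r1 * r2)); [ring | lra].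
  by field.
- rewrite (_ : q1 * ((q1 - q2) / (s1 + s2)) + r1 * ((r1 - r2) / (s1 + s2))
     = (q1 ^+ 2 + r1 ^+ 2 - (q1 * q2 + r1 * r2)) / (s1 + s2)); last by field.
  rewrite -e1 hc.
  by rewrite (_ : s1 ^+ 2 - - (s1 * s2) = s1 * (s1 + s2)); [field|ring].
- rewrite (_ : - q1 * ((r1 - r2) / (s1 + s2)) + r1 * ((q1 - q2) / (s1 + s2))
     = (q1 * r2 - q2 * r1) / (s1 + s2)); last by field.
  by rewrite lag mul0r.
- rewrite (_ : q2 * ((q1 - q2) / (s1 + s2)) + r2 * ((r1 - r2) / (s1 + s2))
     = ((q1 * q2 + r1 * r2) - (q2 ^+ 2 + r2 ^+ 2)) / (s1 + s2)); last by field.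
  rewrite -e2 hc.
  by rewrite (_ : - (s1 * s2) - s2 ^+ 2 = - s2 * (s1 + s2)); [field|ring].
- rewrite (_ : - q2 * ((r1 - r2) / (s1 + s2)) + r2 * ((q1 - q2) / (s1 + s2))
     = (q1 * r2 - q2 * r1) / (s1 + s2)); last by field.
  by rewrite lag mul0r.
Qed.

Lemma pair_bound (p1 q1 r1 s1 p2 q2 r2 s2 : R) :
  0 < p1 -> p1 ^+ 2 = 1 + s1 ^+ 2 -> 0 <= s1 -> s1 ^+ 2 = q1 ^+ 2 + r1 ^+ 2 ->
  0 < p2 -> p2 ^+ 2 = 1 + s2 ^+ 2 -> 0 <= s2 -> s2 ^+ 2 = q2 ^+ 2 + r2 ^+ 2 ->
  let x := (Num.sqrt (2 + 2 * (p1 * p2 - (q1 * q2 + r1 * r2))) +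
            Num.sqrt (Num.sqrt (2 + 2 * (p1 * p2 - (q1 * q2 + r1 * r2))) ^+ 2 - 4)) / 2 in
  0 < x /\ x ^+ 2 <= (p1 + s1) * (p2 + s2) /\
  (x ^+ 2 = (p1 + s1) * (p2 + s2) -> q1 * q2 + r1 * r2 = - (s1 * s2)).
Proof.
move=> hp1 ep1 hs1 e1 hp2 ep2 hs2 e2 x.
set c := q1 * q2 + r1 * r2.
set L := p1 * p2 - c.
set m := Num.sqrt (2 + 2 * L).
set w := Num.sqrt (m ^+ 2 - 4).
have lag : (s1 * s2) ^+ 2 - c ^+ 2 = (q1 * r2 - q2 * r1) ^+ 2.
  by rewrite exprMn e1 e2 /c; ring.
have hss : 0 <= s1 * s2 by apply: mulr_ge0.
have hcs : c ^+ 2 <= (s1 * s2) ^+ 2.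
  by rewrite -subr_ge0 lag sqr_ge0.
have hc1 : c <= s1 * s2 by nra.
have hc2 : - (s1 * s2) <= c by nra.
have ps1 : s1 < p1 by nra.
have ps2 : s2 < p2 by nra.
have pp : s1 * s2 < p1 * p2.
  apply: (le_lt_trans (y := s1 * p2)); [by apply: ler_wpM2l; lra | by rewrite ltr_pM2r].

have id1 : (p1 * p2 - s1 * s2) ^+ 2 - 1 = (p1 * s2 - p2 * s1) ^+ 2.
  rewrite (_ : 1 = (p1 ^+ 2 - s1 ^+ 2) * (p2 ^+ 2 - s2 ^+ 2)); last by rewrite ep1 ep2; ring.
  ring.
have z1 : 1 <= p1 * p2 - s1 * s2.
  have : 1 <= (p1 * p2 - s1 * s2) ^+ 2 by rewrite -subr_ge0 id1 sqr_ge0.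
  nra.
have hL : 1 <= L by rewrite /L; lra.
have hm0 : 0 <= m by apply: sqrtr_ge0.
have hm2 : m ^+ 2 = 2 + 2 * L by rewrite /m sqrt_sq //; lra.
have hw0 : 0 <= w by apply: sqrtr_ge0.
have hw2 : w ^+ 2 = m ^+ 2 - 4 by rewrite /w sqrt_sq //; lra.
have hm : 0 < m by nra.
have hx : 0 < x by rewrite /x -/m -/w; lra.
have ex : x ^+ 2 = L + m * w / 2.
  rewrite /x -/m -/w.
  rewrite (_ : ((m + w) / 2) ^+ 2 = (m ^+ 2 + w ^+ 2 + 2 * m * w) / 4); last by field.
  by rewrite hw2 hm2; field.
set M' := p1 * p2 + s1 * s2.
set N' := p1 * s2 + p2 * s1.
have hN : 0 <= N' by rewrite /N'; nra.
have idN : N' ^+ 2 = M' ^+ 2 - 1.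
  rewrite (_ : 1 = (p1 ^+ 2 - s1 ^+ 2) * (p2 ^+ 2 - s2 ^+ 2)); last by rewrite ep1 ep2; ring.
  rewrite /N' /M'; ring.
have hLM : L <= M' by rewrite /L /M'; lra.
have emw : (m * w / 2) ^+ 2 = L ^+ 2 - 1.
  rewrite (_ : (m * w / 2) ^+ 2 = m ^+ 2 * w ^+ 2 / 4); last by field.
  by rewrite hw2 hm2; field.
have hmw0 : 0 <= m * w / 2 by nra.
have hmw : m * w / 2 <= N'.
  have : (m * w / 2) ^+ 2 <= N' ^+ 2 by rewrite emw idN; nra.
  nra.
have eg : (p1 + s1) * (p2 + s2) = M' + N' by rewrite /M' /N'; ring.
rewrite eg ex; split => //; split; first lra.
move=> h.
have : L = M' by lra.
rewrite /L /M'; lra.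
Qed.

Lemma rc00 (a b d c z : R) : c ^+ 2 + z ^+ 2 = 1 ->
  (c * a + z * b) * c + (c * b + z * d) * z =
  (a + d) / 2 + (a - d) / 2 * (c ^+ 2 - z ^+ 2) + b * (2 * c * z).
Proof.
move=> h; apply/eqP; rewrite -subr_eq0; apply/eqP.
transitivity (((a + d) / 2) * (c ^+ 2 + z ^+ 2 - 1)); first by field.
by rewrite h subrr mulr0.
Qed.
Lemma rc11 (a b d c z : R) : c ^+ 2 + z ^+ 2 = 1 ->
  (- z * a + c * b) * - z + (- z * b + c * d) * c =
  (a + d) / 2 - (a - d) / 2 * (c ^+ 2 - z ^+ 2) - b * (2 * c * z).
Proof.
move=> h; apply/eqP; rewrite -subr_eq0; apply/eqP.
transitivity (((a + d) / 2) * (c ^+ 2 + z ^+ 2 - 1)); first by field.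
by rewrite h subrr mulr0.
Qed.
Lemma rc01 (a b d c z : R) :
  (c * a + z * b) * - z + (c * b + z * d) * c =
  - ((a - d) / 2) * (2 * c * z) + b * (c ^+ 2 - z ^+ 2).
Proof. by field. Qed.
Lemma rc10 (a b d c z : R) :
  (- z * a + c * b) * c + (- z * b + c * d) * z =
  - ((a - d) / 2) * (2 * c * z) + b * (c ^+ 2 - z ^+ 2).
Proof. by field. Qed.

Lemma rot_conj a b d c z : c ^+ 2 + z ^+ 2 = 1 ->
  (mk2 c (- z) z c)^T *m mk2 a b b d *m mk2 c (- z) z c =
  mk2 ((a + d) / 2 + (a - d) / 2 * (c ^+ 2 - z ^+ 2) + b * (2 * c * z))
      (- ((a - d) / 2) * (2 * c * z) + b * (c ^+ 2 - z ^+ 2))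
      (- ((a - d) / 2) * (2 * c * z) + b * (c ^+ 2 - z ^+ 2))
      ((a + d) / 2 - (a - d) / 2 * (c ^+ 2 - z ^+ 2) - b * (2 * c * z)).
Proof.
move=> h; rewrite mk2_tr !mk2_mul; apply: mk2_inj.
- exact: rc00.
- exact: rc01.
- exact: rc10.
- exact: rc11.
Qed.

Lemma inv_ps (p s : R) : p ^+ 2 - s ^+ 2 = 1 -> 0 < p -> 0 <= s -> (p + s)^-1 = p - s.
Proof.
move=> h hp hs.
have nz : p + s != 0 by rewrite gt_eqF //; lra.
have E : (p + s) * (p - s) = 1 by rewrite -h; ring.
by rewrite -[RHS](mulKf nz) E mulr1.
Qed.

Lemma diag_pair (a1 b1 d1 a2 b2 d2 : R) : 0 < a1 -> a1 * d1 - b1 ^+ 2 = 1 ->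
  0 < a2 -> a2 * d2 - b2 ^+ 2 = 1 ->
  (a1 - d1) / 2 * ((a2 - d2) / 2) + b1 * b2 =
    - (Num.sqrt (((a1 - d1) / 2) ^+ 2 + b1 ^+ 2) * Num.sqrt (((a2 - d2) / 2) ^+ 2 + b2 ^+ 2)) ->
  exists A, O2 A /\
    A^T *m mk2 a1 b1 b1 d1 *m A = diag2 (lmax (mk2 a1 b1 b1 d1)) (lmax (mk2 a1 b1 b1 d1))^-1 /\
    A^T *m mk2 a2 b2 b2 d2 *m A = diag2 (lmax (mk2 a2 b2 b2 d2))^-1 (lmax (mk2 a2 b2 b2 d2)).
Proof.
move=> ha1 hd1 ha2 hd2.
rewrite !lmax_mk2 //.
set q1 := (a1 - d1) / 2; set q2 := (a2 - d2) / 2.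
set s1 := Num.sqrt (q1 ^+ 2 + b1 ^+ 2); set s2 := Num.sqrt (q2 ^+ 2 + b2 ^+ 2).
move=> hc.
have hs1 : 0 <= s1 by apply: sqrtr_ge0.
have hs2 : 0 <= s2 by apply: sqrtr_ge0.
have e1 : s1 ^+ 2 = q1 ^+ 2 + b1 ^+ 2 by rewrite sqrt_sq // addr_ge0 // sqr_ge0.
have e2 : s2 ^+ 2 = q2 ^+ 2 + b2 ^+ 2 by rewrite sqrt_sq // addr_ge0 // sqr_ge0.
have hdd1 : 0 < d1 by nra.
have hdd2 : 0 < d2 by nra.
have ps1 : ((a1 + d1) / 2) ^+ 2 - s1 ^+ 2 = 1.
  by rewrite e1 /q1; transitivity (a1 * d1 - b1 ^+ 2); [field | exact: hd1].
have ps2 : ((a2 + d2) / 2) ^+ 2 - s2 ^+ 2 = 1.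
  by rewrite e2 /q2; transitivity (a2 * d2 - b2 ^+ 2); [field | exact: hd2].
rewrite (inv_ps ps1) ?(inv_ps ps2) //; try lra.
have [C [S [hCS [h1 [h2 [h3 h4]]]]]] := rotCS hs1 e1 hs2 e2 hc.
have [c [z [hcz [hC hS]]]] := half_angle hCS.
exists (mk2 c (- z) z c); split.
  rewrite /O2 mk2_tr mk2_mul mk2_1; apply: mk2_inj; rewrite -?hcz; ring.
rewrite !rot_conj // hC hS -/q1 -/q2 !diag2E; split; apply: mk2_inj.
all: lra.
Qed.

Lemma pqrs (a b d : R) : 0 < a -> a * d - b ^+ 2 = 1 ->
  0 < (a + d) / 2 /\ ((a + d) / 2) ^+ 2 = 1 + Num.sqrt (((a - d) / 2) ^+ 2 + b ^+ 2) ^+ 2 /\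
  0 <= Num.sqrt (((a - d) / 2) ^+ 2 + b ^+ 2) /\
  Num.sqrt (((a - d) / 2) ^+ 2 + b ^+ 2) ^+ 2 = ((a - d) / 2) ^+ 2 + b ^+ 2.
Proof.
move=> ha hd.
have e : Num.sqrt (((a - d) / 2) ^+ 2 + b ^+ 2) ^+ 2 = ((a - d) / 2) ^+ 2 + b ^+ 2.
  by rewrite sqrt_sq // addr_ge0 // sqr_ge0.
have hdd : 0 < d by nra.
split; first lra.
split; last by split => //; apply: sqrtr_ge0.
rewrite e; transitivity ((a * d - b ^+ 2) + (((a - d) / 2) ^+ 2 + b ^+ 2)); first by field.
by rewrite hd.
Qed.

Lemma combine (U V x y : R) : 0 < U -> 0 < V -> 0 < x -> 0 < y ->
  x ^+ 2 <= U -> y ^+ 2 <= V -> Num.sqrt (U * V) <= x * y ->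
  x ^+ 2 = U /\ y ^+ 2 = V.
Proof.
move=> hU hV hx hy hxU hyV h.
have hUV : U * V <= (x * y) ^+ 2.
  have e : Num.sqrt (U * V) ^+ 2 = U * V by rewrite sqrt_sq // ltW // mulr_gt0.
  have s0 := sqrtr_ge0 (U * V).
  rewrite -e; nra.
have h2 : (x * y) ^+ 2 = x ^+ 2 * y ^+ 2 by ring.
rewrite h2 in hUV.
have hx2 : 0 < x ^+ 2 by rewrite exprn_gt0.
have hy2 : 0 < y ^+ 2 by rewrite exprn_gt0.
split; nra.
Qed.
Lemma final (xg xh g1 g2 h1 h2 : R) (P Q : Prop) :
  0 < g1 -> 0 < g2 -> 0 < h1 -> 0 < h2 ->
  0 < xg -> xg ^+ 2 <= g1 * g2 -> (xg ^+ 2 = g1 * g2 -> P) ->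
  0 < xh -> xh ^+ 2 <= h1 * h2 -> (xh ^+ 2 = h1 * h2 -> Q) ->
  Num.sqrt (g1 * h1 * g2 * h2) <= xg * xh -> P /\ Q.
Proof.
move=> g1p g2p h1p h2p xp xU xP yp yV yQ K.
have [e1 e2] : xg ^+ 2 = g1 * g2 /\ xh ^+ 2 = h1 * h2.
  apply: combine => //; try by apply: mulr_gt0.
  by rewrite (_ : g1 * g2 * (h1 * h2) = g1 * h1 * g2 * h2) //; ring.
by split; [apply: xP | apply: yQ].
Qed.
End S.

Unset Implicit Arguments.

Theorem mainTheorem8 (R : rcfType) (G1 G2 H1 H2 : 'M[R]_2) :
  SLsym2 G1 -> SLsym2 G2 -> SLsym2 H1 -> SLsym2 H2 ->
  Kmin_is G1 G2 H1 H2
    (Num.sqrt (lmax G1 * lmax H1 * lmax G2 * lmax H2)) ->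
  exists A B : 'M[R]_2, O2 A /\ O2 B /\
    A^T *m G1 *m A = diag2 (lmax G1) (lmax G1)^-1 /\
    A^T *m G2 *m A = diag2 (lmax G2)^-1 (lmax G2) /\
    B^T *m H1 *m B = diag2 (lmax H1) (lmax H1)^-1 /\
    B^T *m H2 *m B = diag2 (lmax H2)^-1 (lmax H2).
Proof.
move=> sG1 sG2 sH1 sH2 [_ Hmin].
have [a1 [b1 [c1 [d1 E1]]]] := mk2_ex G1; subst G1.
have [a2 [b2 [c2 [d2 E2]]]] := mk2_ex G2; subst G2.
have [a3 [b3 [c3 [d3 E3]]]] := mk2_ex H1; subst H1.
have [a4 [b4 [c4 [d4 E4]]]] := mk2_ex H2; subst H2.
have [? [ha1 hd1]] := SLsym2_facts sG1; subst c1.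
have [? [ha2 hd2]] := SLsym2_facts sG2; subst c2.
have [? [ha3 hd3]] := SLsym2_facts sH1; subst c3.
have [? [ha4 hd4]] := SLsym2_facts sH2; subst c4.
have [B0 [sB0 [xB1 xB2]]] := chol ha1 hd1 ha2 hd2.
have [A0 [sA0 [yA1 yA2]]] := chol ha3 hd3 ha4 hd4.
have K := Hmin A0 B0 sA0 sB0.
rewrite /Kobj xB1 xB2 yA1 yA2 maxxx !lmax_mk2 // in K.
have [p1 [ep1 [s1 e1]]] := pqrs ha1 hd1.
have [p2 [ep2 [s2 e2]]] := pqrs ha2 hd2.
have [p3 [ep3 [s3 e3]]] := pqrs ha3 hd3.
have [p4 [ep4 [s4 e4]]] := pqrs ha4 hd4.
have [xG [xGU xGeq]] := pair_bound p1 ep1 s1 e1 p2 ep2 s2 e2.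
have [xH [xHV xHeq]] := pair_bound p3 ep3 s3 e3 p4 ep4 s4 e4.
have gp (x y : R) : 0 < x -> 0 <= y -> 0 < x + y by move=> *; lra.
have [hcG hcH] := final (gp _ _ p1 s1) (gp _ _ p2 s2) (gp _ _ p3 s3) (gp _ _ p4 s4)
  xG xGU xGeq xH xHV xHeq K.
have [A [oA [A1 A2]]] := diag_pair ha1 hd1 ha2 hd2 hcG.
have [B [oB [B1 B2]]] := diag_pair ha3 hd3 ha4 hd4 hcH.
by exists A, B.
Qed.
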